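(* Let $V\ge3$, $I_1<I_2<I_3$, and suppose $x_2=I_2-I_1$ and $x_3=I_3-I_1$ are incommensurable ($x_2/x_3\notin\mathbb{Q}$). Let $\rho$ be a continuous, strictly positive probability density on $\mathbb{R}_+$ such that the system $(\rho_1,\rho_2,\rho_3)=(\rho,\rho,\rho)$ is admissible. Then there is $\beta>0$ with $\rho(T)=\beta e^{-\beta T}$ for all $T\ge0$.
   Context: For $I_v<I_w$, a pair of densities $(\rho_v,\rho_w)$ on $\mathbb{R}_+$ with corresponding random variables $\xi_v,\xi_w$ is admissible if the conditional density of $\xi_v-(I_w-I_v)$ given $\{\xi_v>I_w-I_v\}$ equals $\rho_w$. A system $(\rho_1,\dots,\rho_V)$ is admissible if each consecutive pair $(\rho_v,\rho_{v+1})$ is admissible. *)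

(* Defs.v *)
From Stdlib Require Import Reals Lra QArith Qreals.
Open Scope R_scope.

Definition integral_eq (f : R -> R) (a b l : R) : Prop :=
  exists pr : Riemann_integrable f a b, RiemannInt pr = l.

Definition tail_integral (f : R -> R) (a l : R) : Prop :=
  (forall b, a <= b -> exists pr : Riemann_integrable f a b, True) /\
  (forall eps, 0 < eps -> exists M, forall b, M <= b -> a <= b ->
      forall pr : Riemann_integrable f a b, Rabs (RiemannInt pr - l) < eps).

Definition continuous_on_Rplus (f : R -> R) : Prop :=
  forall x, 0 <= x -> limit1_in f (fun y => 0 <= y) (f x) x.

Definition prob_density_Rplus (f : R -> R) : Prop :=
  (forall T, 0 <= T -> 0 <= f T) /\ tail_integral f 0 1.

(* Admissible pair (rho_v, rho_w) for I_v < I_w: with d = I_w - I_v,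
   S = P(xi_v > d) = \int_d^oo rho_v > 0 and the conditional density of
   xi_v - d given xi_v > d, namely T |-> rho_v (T + d) / S, equals rho_w
   (pointwise on R_+). *)
Definition admissible_pair (Iv Iw : R) (rhov rhow : R -> R) : Prop :=
  Iv < Iw /\
  exists S, tail_integral rhov (Iw - Iv) S /\ 0 < S /\
    forall T, 0 <= T -> rhow T = rhov (T + (Iw - Iv)) / S.

Definition admissible_system (V : nat) (I : nat -> R) (rho : nat -> R -> R) : Prop :=
  forall v : nat, (1 <= v)%nat -> (v < V)%nat ->
    admissible_pair (I v) (I (S v)) (rho v) (rho (S v)).

Definition incommensurable (x y : R) : Prop :=
  ~ exists q : Q, x / y = Q2R q.

(* Main.v *)
Require Import Defs.
From Stdlib Require Import Reals QArith Qreals Lra Lia ZArith Classical.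
From Coquelicot Require Import Coquelicot.
Open Scope R_scope.

Definition Gm (a b x : R) : Prop := exists m n : Z, x = IZR m * a + IZR n * b.

Lemma Gm_sub a b x y : Gm a b x -> Gm a b y -> Gm a b (x - y).
Proof. intros [m1 [n1 H1]] [m2 [n2 H2]]. exists (m1 - m2)%Z, (n1 - n2)%Z.
  rewrite !minus_IZR; subst; ring. Qed.

Lemma Gm_mul a b x k : Gm a b x -> Gm a b (IZR k * x).
Proof. intros [m1 [n1 H1]]. exists (k * m1)%Z, (k * n1)%Z.
  rewrite !mult_IZR; subst; ring. Qed.

Lemma small_elems a b : 0 < a -> 0 < b ->
  ~ (exists q : Q, a / (a + b) = Q2R q) ->
  forall eps, 0 < eps -> exists g, Gm a b g /\ 0 < g < eps.
Proof.
  intros Ha Hb Hirr.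
  set (E := fun x => Gm a b (- x) /\ 0 < - x).
  assert (Hbd : bound E). { exists 0. intros x [_ Hx]. lra. }
  assert (Hne : exists x, E x). { exists (- a). split; rewrite Ropp_involutive.
    - exists 1%Z, 0%Z. simpl. ring. - lra. }
  destruct (completeness E Hbd Hne) as [m [Hub Hlub]].
  assert (Hm0 : m <= 0). { apply Hlub. intros x [_ Hx]. lra. }
  assert (Hnot : forall y, y < m -> exists g, Gm a b g /\ 0 < g /\ y < - g).
  { intros y Hy. apply NNPP. intro Hc.
    assert (m <= y); [|lra]. apply Hlub. intros x [Hx1 Hx2].
    destruct (Rle_lt_dec x y) as [|Hlt]; [auto|].
    exfalso. apply Hc. exists (- x). rewrite Ropp_involutive. auto. }
  assert (HinE : forall g, Gm a b g -> 0 < g -> - g <= m).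
  { intros g Hg Hg0. apply Hub. split; rewrite Ropp_involutive; auto. }
  destruct (Req_dec m 0) as [Hm|Hm].
  - intros eps Heps. destruct (Hnot (- eps)) as [g [Hg [Hg0 Hge]]]; [lra|].
    exists g. split; [auto|lra].
  - exfalso. assert (Hmlt : m < 0) by lra. set (g0 := - m).
    assert (Hg0G : Gm a b g0).
    { destruct (Hnot (2 * m)) as [g1 [Hg1 [Hg1p Hg1l]]]; [lra|].
      pose proof (HinE g1 Hg1 Hg1p) as Hg1m.
      destruct (Req_dec g1 g0) as [<-|Hne1]; [auto|].
      destruct (Hnot (- g1)) as [g2 [Hg2 [Hg2p Hg2l]]]; [unfold g0 in *; lra|].
      pose proof (HinE g2 Hg2 Hg2p).
      pose proof (HinE (g1 - g2) (Gm_sub _ _ _ _ Hg1 Hg2)). unfold g0 in *. lra. }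
    assert (Hmult : forall x, Gm a b x -> x = IZR (Zfloor (x / g0)) * g0).
    { intros x Hx. destruct (Zfloor_bound (x / g0)) as [H1 H2].
      set (k := Zfloor (x / g0)) in *.
      assert (Hg0p : 0 < g0) by (unfold g0; lra).
      assert (Hr1 : IZR k * g0 <= x).
      { apply Rmult_le_compat_r with (r := g0) in H1; [|lra].
        unfold Rdiv in H1. rewrite Rmult_assoc, Rinv_l in H1; lra. }
      assert (Hr2 : x < IZR k * g0 + g0).
      { apply Rmult_lt_compat_r with (r := g0) in H2; [|lra].
        unfold Rdiv in H2. rewrite Rmult_assoc, Rinv_l in H2; lra. }
      destruct (Req_dec x (IZR k * g0)) as [|Hnx]; [auto|].
      pose proof (HinE (x - IZR k * g0) (Gm_sub _ _ _ _ Hx (Gm_mul _ _ _ k Hg0G))).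
      unfold g0 in *. lra. }
    assert (Hg0p : 0 < g0) by (unfold g0; lra).
    assert (HaG : Gm a b a) by (exists 1%Z, 0%Z; simpl; ring).
    assert (HbG : Gm a b b) by (exists 0%Z, 1%Z; simpl; ring).
    pose proof (Hmult a HaG) as Ha'. pose proof (Hmult b HbG) as Hb'.
    set (p := Zfloor (a / g0)) in *. set (q := Zfloor (b / g0)) in *.
    assert (Hpq : (0 < p + q)%Z).
    { apply lt_0_IZR. rewrite plus_IZR.
      assert (Hs : 0 < (IZR p + IZR q) * g0) by (rewrite Rmult_plus_distr_r; lra).
      destruct (Rle_lt_dec (IZR p + IZR q) 0); [|lra].
      assert ((IZR p + IZR q) * g0 <= 0); [|lra].
      nra. }
    apply Hirr. exists (Qmake p (Z.to_pos (p + q))). unfold Q2R. simpl.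
    rewrite Z2Pos.id by auto. rewrite plus_IZR.
    rewrite Ha', Hb'. field. 
    rewrite <- plus_IZR. assert (IZR (p+q) <> 0) by (apply not_0_IZR; lia). split; lra.
Qed.
Section Sh.
Variables (h : R -> R) (a b d : R).
Hypothesis Ha : 0 < a. Hypothesis Hb : 0 < b.
Hypothesis Hha : forall x, 0 <= x -> h (x + a) = h x.
Hypothesis Hhb : forall x, 0 <= x -> h (x + b) = h x + d.

Lemma fwd_shift x : 0 <= x -> forall p q : nat,
  h (x + INR p * a + INR q * b) = h x + INR q * d.
Proof.
  intros Hx p q.
  assert (Hq : forall q : nat, h (x + INR q * b) = h x + INR q * d).
  { induction q0 as [|q0 IH]. { change (INR 0) with 0. rewrite !Rmult_0_l, !Rplus_0_r. auto. }
    rewrite S_INR. replace (x + (INR q0 + 1) * b) with ((x + INR q0 * b) + b) by ring.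
    rewrite Hhb, IH; [ring|]. pose proof (pos_INR q0). nra. }
  assert (Hp : forall y, 0 <= y -> forall p : nat, h (y + INR p * a) = h y).
  { intros y Hy. induction p0 as [|p0 IH]. { change (INR 0) with 0. rewrite Rmult_0_l, Rplus_0_r. auto. }
    rewrite S_INR. replace (y + (INR p0 + 1) * a) with ((y + INR p0 * a) + a) by ring.
    rewrite Hha, IH; auto. pose proof (pos_INR p0). nra. }
  replace (x + INR p * a + INR q * b) with ((x + INR q * b) + INR p * a) by ring.
  rewrite Hp, Hq; auto. pose proof (pos_INR q). nra.
Qed.

Lemma Z_split (z : Z) : IZR z = INR (Z.to_nat z) - INR (Z.to_nat (- z)).
Proof.
  destruct z; simpl.
  - ring.
  - rewrite INR_IPR. simpl. unfold IZR. ring.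
  - rewrite INR_IPR. simpl. unfold IZR. ring.
Qed.

Lemma zshift y (m n : Z) : 0 <= y -> 0 <= y + IZR m * a + IZR n * b ->
  h (y + IZR m * a + IZR n * b) = h y + IZR n * d.
Proof.
  intros Hy Hw.
  pose proof (fwd_shift y Hy (Z.to_nat m) (Z.to_nat n)) as E1.
  pose proof (fwd_shift _ Hw (Z.to_nat (- m)) (Z.to_nat (- n))) as E2.
  assert (Heq : y + IZR m * a + IZR n * b + INR (Z.to_nat (- m)) * a + INR (Z.to_nat (- n)) * b
     = y + INR (Z.to_nat m) * a + INR (Z.to_nat n) * b).
  { rewrite (Z_split m), (Z_split n). ring. }
  rewrite Heq, E1 in E2. replace (IZR n * d) with ((INR (Z.to_nat n) - INR (Z.to_nat (- n))) * d) by (rewrite (Z_split n); ring). lra.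
Qed.

Hypothesis Hcont : forall T, 0 <= T -> forall eps, 0 < eps -> exists del, 0 < del /\
  forall y, 0 <= y -> Rabs (y - T) < del -> Rabs (h y - h T) < eps.
Hypothesis Hsmall : forall eps, 0 < eps -> exists g, Gm a b g /\ 0 < g < eps.

Lemma d_zero : d = 0.
Proof.
  apply NNPP. intro Hd.
  assert (Hd' : 0 < Rabs d / 2) by (pose proof (Rabs_pos_lt d Hd); lra).
  destruct (Hcont 0 (Rle_refl 0) _ Hd') as [del [Hdel H]].
  destruct (Hsmall (Rmin del a)) as [g [[m [n Hg]] Hg0]].
  { apply Rmin_pos; lra. }
  assert (Hgmin : g < del /\ g < a) by (pose proof (Rmin_l del a); pose proof (Rmin_r del a); lra).
  assert (E := zshift 0 m n (Rle_refl 0)). rewrite Rplus_0_l in E.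
  rewrite <- Hg in E. specialize (E ltac:(lra)).
  specialize (H g ltac:(lra) ltac:(rewrite Rminus_0_r, Rabs_right; lra)).
  rewrite E in H. replace (h 0 + IZR n * d - h 0) with (IZR n * d) in H by ring.
  rewrite Rabs_mult in H.
  assert (Hn : n = 0%Z).
  { apply one_IZR_lt1. assert (Rabs (IZR n) < 1).
    { pose proof (Rabs_pos_lt d Hd). nra. }
    apply Rabs_def2 in H0. lra. }
  subst n. simpl in Hg. rewrite Rmult_0_l, Rplus_0_r in Hg.
  assert (0 < IZR m < 1).
  { split; nra. }
  assert (m = 0%Z) by (apply one_IZR_lt1; lra). subst m. simpl in *. lra.
Qed.

Lemma h_const : forall T, 0 <= T -> h T = h 0.
Proof.
  intros T HT. pose proof d_zero as Hd0.
  destruct (Req_dec (h T) (h 0)) as [|Hne]; [auto|exfalso].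
  assert (He : 0 < Rabs (h T - h 0)) by (apply Rabs_pos_lt; lra).
  destruct (Hcont T HT _ He) as [del [Hdel H]].
  destruct (Hsmall del Hdel) as [g [Hg Hg0]].
  destruct (archimed (T / g)) as [A1 A2].
  set (k := up (T / g)) in *.
  assert (Hk1 : T < IZR k * g).
  { apply Rmult_lt_compat_r with (r := g) in A1; [|lra].
    unfold Rdiv in A1. rewrite Rmult_assoc, Rinv_l in A1; lra. }
  assert (Hk2 : IZR k * g <= T + g).
  { assert (IZR k <= T / g + 1) by lra.
    apply Rmult_le_compat_r with (r := g) in H0; [|lra].
    unfold Rdiv in H0. rewrite Rmult_plus_distr_r, Rmult_assoc, Rinv_l in H0; lra. }
  destruct (Gm_mul a b g k Hg) as [m [n Hx]].
  assert (E := zshift 0 m n (Rle_refl 0)). rewrite Rplus_0_l, <- Hx, Hd0, Rmult_0_r, Rplus_0_r in E.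
  specialize (E ltac:(lra)).
  specialize (H (IZR k * g) ltac:(lra) ltac:(rewrite Rabs_right; lra)).
  rewrite E in H. rewrite Rabs_minus_sym in H. lra.
Qed.
End Sh.
Lemma int_formula (rho : R -> R) (K c : R) :
  (forall T, 0 <= T -> rho T = K * exp (c * T)) ->
  forall b, 0 <= b -> forall pr : Riemann_integrable rho 0 b,
  RiemannInt pr = (if Req_EM_T c 0 then K * b else K / c * exp (c * b) - K / c).
Proof.
  intros Hr b Hb pr. rewrite <- RInt_Reals. apply is_RInt_unique.
  apply is_RInt_ext with (f := fun x => K * exp (c * x)).
  { intros x Hx. rewrite Rmin_left in Hx by lra. rewrite Rmax_right in Hx by lra.
    rewrite Hr; lra. }
  destruct (Req_EM_T c 0) as [Hc|Hc].
  - subst c. replace (K * b) with (minus ((fun x => K * x) b) ((fun x => K * x) 0)).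
    2: { unfold minus, plus, opp; simpl. ring. }
    apply (is_RInt_derive (fun x => K * x)).
    + intros x _. auto_derive; auto. rewrite Rmult_0_l, exp_0. ring.
    + intros x _. apply (ex_derive_continuous (fun x => K * exp (0 * x))). auto_derive; auto.
  - replace (K / c * exp (c * b) - K / c) with
      (minus ((fun x => K / c * exp (c * x)) b) ((fun x => K / c * exp (c * x)) 0)).
    2: { unfold minus, plus, opp; simpl. rewrite Rmult_0_r, exp_0. ring. }
    apply (is_RInt_derive (fun x => K / c * exp (c * x))).
    + intros x _. auto_derive; auto. field. auto.
    + intros x _. apply (ex_derive_continuous (fun x => K * exp (c * x))). auto_derive; auto.
Qed.

Lemma int_conclude (rho : R -> R) (K c : R) : 0 < K ->
  (forall T, 0 <= T -> rho T = K * exp (c * T)) ->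
  tail_integral rho 0 1 -> c < 0 /\ K = - c.
Proof.
  intros HK Hr [Hex Hlim].
  assert (HI : forall b, 0 <= b -> forall pr : Riemann_integrable rho 0 b,
     RiemannInt pr = (if Req_EM_T c 0 then K * b else K / c * exp (c * b) - K / c))
    by (apply int_formula; auto).
  destruct (Rlt_le_dec c 0) as [Hc|Hc].
  - split; [auto|].
    set (L := - K / c).
    assert (HL : 0 < L) by (unfold L; replace (- K / c) with (K / (- c)) by (field; lra); apply Rdiv_lt_0_compat; lra).
    assert (HKL : K = - c * L) by (unfold L; field; lra).
    assert (L = 1); [|rewrite HKL, H; ring].
    apply NNPP. intro HL1.
    assert (He : 0 < Rabs (L - 1) / 2) by (pose proof (Rabs_pos_lt (L - 1) ltac:(lra)); lra).
    set (eps := Rabs (L - 1) / 2) in *.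
    destruct (Hlim eps He) as [M HM].
    set (b := Rmax (Rmax M 0) ((L / eps) / (- c))).
    assert (Hb1 : M <= b) by (unfold b; eapply Rle_trans; [apply Rmax_l|apply Rmax_l]).
    assert (Hb0 : 0 <= b) by (unfold b; eapply Rle_trans; [|apply Rmax_l]; apply Rmax_r).
    assert (Hb2 : (L / eps) / (- c) <= b) by (unfold b; apply Rmax_r).
    destruct (Hex b Hb0) as [pr _].
    specialize (HM b Hb1 Hb0 pr). rewrite HI in HM by auto.
    destruct (Req_EM_T c 0) as [|_]; [lra|].
    assert (Hu : L / eps <= - c * b).
    { apply Rmult_le_compat_l with (r := - c) in Hb2; [|lra].
      replace (- c * (L / eps / - c)) with (L / eps) in Hb2 by (field; lra). lra. }
    assert (Hexp : exp (c * b) <= / (1 + - c * b)).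
    { replace (c * b) with (- (- c * b)) by ring. rewrite exp_Ropp.
      apply Rinv_le_contravar. { assert (0 < L / eps) by (apply Rdiv_lt_0_compat; lra). lra. }
      apply exp_ineq1_le. }
    assert (Hsmall : L * exp (c * b) < eps).
    { assert (0 < L / eps) by (apply Rdiv_lt_0_compat; lra).
      assert (H1 : L * / (1 + - c * b) < eps).
      { apply Rmult_lt_reg_r with (r := 1 + - c * b); [lra|].
        rewrite Rmult_assoc, Rinv_l by lra.
        replace L with (L / eps * eps) at 1 by (field; lra).
        assert (eps * (L/eps) <= eps * (-c*b)) by (apply Rmult_le_compat_l; lra). lra. }
      pose proof (exp_pos (c * b)). nra. }
    replace (K / c * exp (c * b) - K / c) with (L - L * exp (c * b)) in HM
      by (unfold L; field; lra).
    pose proof (exp_pos (c * b)).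
    assert (Rabs (L - 1) < 2 * eps).
    { apply Rabs_def2 in HM. apply Rabs_def1; nra. }
    unfold eps in H0. lra.
  - exfalso.
    destruct (Hlim 1 Rlt_0_1) as [M HM].
    set (b := Rmax (Rmax M 0) (2 / K)).
    assert (Hb1 : M <= b) by (unfold b; eapply Rle_trans; [apply Rmax_l|apply Rmax_l]).
    assert (Hb0 : 0 <= b) by (unfold b; eapply Rle_trans; [|apply Rmax_l]; apply Rmax_r).
    assert (Hb2 : 2 / K <= b) by (unfold b; apply Rmax_r).
    destruct (Hex b Hb0) as [pr _].
    specialize (HM b Hb1 Hb0 pr). rewrite HI in HM by auto.
    assert (HKb : 2 <= K * b).
    { apply Rmult_le_compat_l with (r := K) in Hb2; [|lra].
      replace (K * (2 / K)) with 2 in Hb2 by (field; lra). lra. }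
    assert (Hge : K * b <= (if Req_EM_T c 0 then K * b else K / c * exp (c * b) - K / c)).
    { destruct (Req_EM_T c 0) as [|Hc0]; [lra|].
      pose proof (exp_ineq1_le (c * b)).
      replace (K / c * exp (c * b) - K / c) with (K / c * (exp (c * b) - 1)) by ring.
      assert (0 < K / c) by (apply Rdiv_lt_0_compat; lra).
      replace (K * b) with (K / c * (c * b)) by (field; lra).
      apply Rmult_le_compat_l; lra. }
    apply Rabs_def2 in HM. lra.
Qed.

Lemma cont_h (rho : R -> R) (c T : R) : 0 <= T ->
  (forall y, 0 <= y -> 0 < rho y) ->
  limit1_in rho (fun y => 0 <= y) (rho T) T ->
  forall eps, 0 < eps -> exists del, 0 < del /\ forall y, 0 <= y -> Rabs (y - T) < del ->
  Rabs ((ln (rho y) - c * y) - (ln (rho T) - c * T)) < eps.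
Proof.
  intros HT Hpos Hl eps Heps.
  pose proof (Hpos T HT) as HrT.
  destruct (ln_continue (rho T) HrT (eps / 2) ltac:(lra)) as [alp1 [Halp1 H1]].
  destruct (Hl alp1 Halp1) as [del1 [Hdel1 H2]].
  set (del2 := eps / (2 * (Rabs c + 1))).
  assert (Hdel2 : 0 < del2) by (unfold del2; apply Rdiv_lt_0_compat; [lra|pose proof (Rabs_pos c); lra]).
  exists (Rmin del1 del2). split; [apply Rmin_pos; lra|].
  intros y Hy Hyd.
  pose proof (Rmin_l del1 del2). pose proof (Rmin_r del1 del2).
  assert (Hln : Rabs (ln (rho y) - ln (rho T)) < eps / 2).
  { destruct (Req_dec (rho y) (rho T)) as [E|E].
    - rewrite E, Rminus_diag, Rabs_R0. lra.
    - assert (Hd : R_dist (rho y) (rho T) < alp1).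
      { apply (H2 y). split; [auto|]. simpl. unfold R_dist. lra. }
      apply (H1 (rho y)). split; [split; [apply Hpos; auto|auto]|]. simpl. exact Hd. }
  assert (Hcy : Rabs (c * y - c * T) < eps / 2).
  { rewrite <- Rmult_minus_distr_l, Rabs_mult.
    assert (Rabs (y - T) < del2) by lra.
    assert (Rabs c * Rabs (y - T) <= Rabs c * del2) by (apply Rmult_le_compat_l; [apply Rabs_pos|lra]).
    assert (Rabs c * del2 < eps / 2).
    { unfold del2. pose proof (Rabs_pos c).
      apply Rmult_lt_reg_r with (r := 2 * (Rabs c + 1)); [lra|].
      unfold Rdiv. field_simplify; lra. }
    lra. }
  replace (ln (rho y) - c * y - (ln (rho T) - c * T)) with
    ((ln (rho y) - ln (rho T)) - (c * y - c * T)) by ring.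
  eapply Rle_lt_trans; [apply Rabs_triang|]. rewrite Rabs_Ropp. lra.
Qed.

Theorem theorem6 (I : nat -> R) (rho : R -> R) :
  I 1%nat < I 2%nat -> I 2%nat < I 3%nat ->
  incommensurable (I 2%nat - I 1%nat) (I 3%nat - I 1%nat) ->
  continuous_on_Rplus rho ->
  (forall T, 0 <= T -> 0 < rho T) ->
  prob_density_Rplus rho ->
  admissible_system 3 I (fun _ => rho) ->
  exists beta, 0 < beta /\ forall T, 0 <= T -> rho T = beta * exp (- (beta * T)).
Proof.
  intros H12 H23 Hinc Hcont Hpos [_ Htail] Hadm.
  destruct (Hadm 1%nat ltac:(lia) ltac:(lia)) as [_ [S1 [_ [HS1 HE1]]]].
  destruct (Hadm 2%nat ltac:(lia) ltac:(lia)) as [_ [S2 [_ [HS2 HE2]]]].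
  simpl in HE1, HE2.
  set (a := I 2%nat - I 1%nat) in *. set (b := I 3%nat - I 2%nat) in *.
  assert (Ha : 0 < a) by (unfold a; lra). assert (Hb : 0 < b) by (unfold b; lra).
  set (c := ln S1 / a). set (d := ln S2 - c * b).
  set (h := fun T => ln (rho T) - c * T).
  assert (Hra : forall T, 0 <= T -> rho (T + a) = S1 * rho T).
  { intros T HT. rewrite (HE1 T HT). field. lra. }
  assert (Hrb : forall T, 0 <= T -> rho (T + b) = S2 * rho T).
  { intros T HT. rewrite (HE2 T HT). field. lra. }
  assert (Hha : forall x, 0 <= x -> h (x + a) = h x).
  { intros x Hx. unfold h. rewrite Hra, ln_mult by (auto; apply Hpos; auto).
    unfold c. field. lra. }
  assert (Hhb : forall x, 0 <= x -> h (x + b) = h x + d).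
  { intros x Hx. unfold h, d. rewrite Hrb, ln_mult by (auto; apply Hpos; auto). ring. }
  assert (Hhc : forall T, 0 <= T -> forall eps, 0 < eps -> exists del, 0 < del /\
    forall y, 0 <= y -> Rabs (y - T) < del -> Rabs (h y - h T) < eps).
  { intros T HT. unfold h. apply cont_h; auto. }
  assert (Hsm : forall eps, 0 < eps -> exists g, Gm a b g /\ 0 < g < eps).
  { apply small_elems; auto.
    replace (a + b) with (I 3%nat - I 1%nat) by (unfold a, b; ring). exact Hinc. }
  pose proof (h_const h a b d Ha Hb Hha Hhb Hhc Hsm) as Hconst.
  set (K := exp (h 0)).
  assert (Hform : forall T, 0 <= T -> rho T = K * exp (c * T)).
  { intros T HT. unfold K. rewrite <- exp_plus.
    rewrite <- (Hconst T HT). unfold h.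
    replace (ln (rho T) - c * T + c * T) with (ln (rho T)) by ring.
    rewrite exp_ln; auto. }
  destruct (int_conclude rho K c (exp_pos _) Hform Htail) as [Hc HK].
  exists (- c). split; [lra|].
  intros T HT. rewrite Hform by auto. rewrite HK. f_equal. f_equal. ring.
Qed.
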